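(* There is a one-round proof labeling scheme for $\textsc{Trapezoid-Recognition}$ with certificates of size $\mathcal{O}(\log n)$; that is, a proof labeling scheme deciding whether the connected $n$-node network $G$ is a trapezoid graph, in which every certificate has $\mathcal{O}(\log n)$ bits.
   Context: A trapezoid graph is the intersection graph of a family of trapezoids each having one side on a fixed top horizontal line and one side on a fixed parallel bottom horizontal line (each trapezoid is the convex hull of two points on the top line and two points on the bottom line). $\textsc{Trapezoid-Recognition}$ is the set of configurations $\langle G,\mathrm{id}\rangle$ with $G$ a trapezoid graph. Distributed setting: $G$ is a simple connected $n$-node graph, each node has a unique identifier in $\{1,\dots,\mathrm{poly}(n)\}$, nodes know only a polynomial upper bound on $n$. A proof labeling scheme (one-round, $\mathsf{dM}$) consists of an untrusted prover assigning each node $v$ a certificate $c(v)$, followed by one deterministic verification round in which each node sees its own id and certificate and the certificates (and ids) of its neighbors and accepts or rejects. Completeness: if $G$ is in the class, some certificate assignment makes all nodes accept. Soundness: if $G$ is not in the class, for every certificate assignment at least one node rejects. Its size is the maximum certificate length in bits. *)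

(* Defs.v *)
From Stdlib Require Import Reals.
From mathcomp Require Import all_boot.

Set Implicit Arguments.
Unset Strict Implicit.
Unset Printing Implicit Defensive.

Definition simple_graph (n : nat) (e : rel 'I_n) : Prop :=
  (forall u v, e u v = e v u) /\ (forall v, e v v = false).

Definition connected_graph (n : nat) (e : rel 'I_n) : Prop :=
  forall u v, connect e u v.

(* Points of the plane; top line is y = 1, bottom line is y = 0. *)
Definition point := (R * R)%type.

(* A trapezoid is given by two x-coordinates on the top line (t1,t2) and
   two on the bottom line (b1,b2); the trapezoid is the convex hull of the
   four points (t1,1), (t2,1), (b1,0), (b2,0). *)
Record trapezoid := Trapezoid { top1 : R; top2 : R; bot1 : R; bot2 : R }.

Local Open Scope R_scope.
Definition in_trapezoid (T : trapezoid) (p : point) : Prop :=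
  exists l1 l2 l3 l4 : R,
    0 <= l1 /\ 0 <= l2 /\ 0 <= l3 /\ 0 <= l4 /\
    l1 + l2 + l3 + l4 = 1 /\
    fst p = l1 * top1 T + l2 * top2 T + l3 * bot1 T + l4 * bot2 T /\
    snd p = l1 * 1 + l2 * 1 + l3 * 0 + l4 * 0.

Definition trapezoids_intersect (T1 T2 : trapezoid) : Prop :=
  exists p : point, in_trapezoid T1 p /\ in_trapezoid T2 p.

Local Close Scope R_scope.

Definition trapezoid_graph (n : nat) (e : rel 'I_n) : Prop :=
  exists T : 'I_n -> trapezoid,
    forall u v, u != v -> (e u v <-> trapezoids_intersect (T u) (T v)).

Definition certificate := seq bool.

(* Since
   identifiers are unique this is exactly the set of pairs
   (id, certificate) of the neighbours. *)
Definition neighbour_view (n : nat) (e : rel 'I_n) (id : 'I_n -> nat)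
  (c : 'I_n -> certificate) (v : 'I_n) : nat -> option certificate :=
  fun j => match [pick u | e v u && (id u == j)] with
           | Some u => Some (c u)
           | None => None
           end.

(* A one-round deterministic verifier: given the known upper bound N on n,
   its own identifier, its own certificate and its neighbourhood view,
   a node accepts (true) or rejects (false). *)
Definition verifier :=
  nat -> nat -> certificate -> (nat -> option certificate) -> bool.

Definition accepts_at (A : verifier) (N n : nat) (e : rel 'I_n)
  (id : 'I_n -> nat) (c : 'I_n -> certificate) (v : 'I_n) : bool :=
  A N (id v) (c v) (neighbour_view e id c v).

Definition admissible (k n N : nat) (e : rel 'I_n) (id : 'I_n -> nat) : Prop :=
  0 < n /\ simple_graph e /\ connected_graph e /\
  injective id /\ (forall v, 1 <= id v <= n ^ k) /\ n <= N <= n ^ k.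

Definition trapezoid_PLS (k : nat) (A : verifier) (f : nat -> nat) : Prop :=
  forall n N (e : rel 'I_n) (id : 'I_n -> nat),
    @admissible k n N e id ->
    (trapezoid_graph e ->
       exists c : 'I_n -> certificate,
         (forall v, size (c v) <= f n) /\ (forall v, accepts_at A N e id c v))
    /\
    (~ trapezoid_graph e ->
       forall c : 'I_n -> certificate, exists v, accepts_at A N e id c v = false).

(* Main.v *)
Require Import Defs.
From Stdlib Require Import Reals Lra Psatz.
From mathcomp Require Import all_boot zify.

Set Implicit Arguments.
Unset Strict Implicit.
Unset Printing Implicit Defensive.

(* Each node gets a box model
   (A,B,C,D) of its trapezoid, lower-bound-certified counts L, R of the nodes
   strictly to its left / right (with a parent pointer), and a spanning-tree
   certification of n.  Soundness: neighbourhood = incomparable boxes. *)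


Fixpoint encn (f x : nat) : seq bool :=
  match f with
  | 0 => [:: false]
  | f'.+1 => if x is 0 then [:: false] else [:: true; odd x] ++ encn f' x./2
  end.
Definition enc_nat x := encn x x.

Fixpoint decn (s : seq bool) : nat * seq bool :=
  match s with
  | true :: b :: s' => let (v, r) := decn s' in (b + (v.*2), r)
  | _ :: s' => (0, s')
  | [::] => (0, [::])
  end.

Fixpoint decl (m : nat) (s : seq bool) : seq nat :=
  if m is m'.+1 then let (v, r) := decn s in v :: decl m' r else [::].

Definition enc_list (l : seq nat) : seq bool := flatten (map enc_nat l).

Lemma decn_encn f x s : x <= f -> decn (encn f x ++ s) = (x, s).
Proof.
elim: f x => [|f IH] x hx /=.
  by move: hx; rewrite leqn0 => /eqP ->.
case: x hx => [|x] hx //=.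
rewrite IH; last by lia.
by rewrite -[in RHS](odd_double_half x.+1) addnC.
Qed.

Lemma decl_enc l : decl (size l) (enc_list l) = l.
Proof.
elim: l => [|x l IH] //=.
by rewrite /enc_nat decn_encn // IH.
Qed.


Lemma size_encn f x m : x < 2 ^ m -> size (encn f x) <= (m.*2).+1.
Proof.
elim: f x m => [|f IH] x m hx /=; first by [].
case: x hx => [|x] hx //=.
case: m hx => [|m] hx; first by rewrite expn0 ltnS leqn0 in hx.
have h := IH (x.+1./2) m ltac:(rewrite expnS in hx; lia).
simpl. change (x.+1./2) with (uphalf x) in h. rewrite doubleS. lia.
Qed.

Local Open Scope R_scope.

Lemma lin_exists (f0 f1 g0 g1 : R) :
  0 <= f0 + g0 -> 0 <= f1 + g1 -> ~ (f0 < 0 /\ f1 < 0) -> ~ (g0 < 0 /\ g1 < 0) ->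
  exists y, 0 <= y <= 1 /\ 0 <= y * f1 + (1 - y) * f0 /\ 0 <= y * g1 + (1 - y) * g0.
Proof.
move=> h0 h1 hf hg.
destruct (Rle_dec 0 f1) as [a1|a1]; destruct (Rle_dec 0 g1) as [b1|b1].
- exists 1; split; [lra|]; split; lra.
- (* g1 < 0 -> g0 >= 0 ; f0 < 0 else y=0 *)
  destruct (Rle_dec 0 f0) as [a0|a0].
  + exists 0; split; [lra|]; split; lra.
  + exists (f0 / (f0 - f1)).
    have hd : f0 - f1 < 0 by lra.
    have e : f0 / (f0 - f1) * f1 + (1 - f0 / (f0 - f1)) * f0 = 0 by field; lra.
    have e2 : f0 / (f0 - f1) * g1 + (1 - f0 / (f0 - f1)) * g0 =
              (f0 / (f0 - f1) * (f1 + g1) + (1 - f0 / (f0 - f1)) * (f0 + g0)) -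
              (f0 / (f0 - f1) * f1 + (1 - f0 / (f0 - f1)) * f0) by ring.
    have hy0 : 0 <= f0 / (f0 - f1).
      have -> : f0 / (f0 - f1) = (- f0) * / (f1 - f0) by field; lra.
      apply Rmult_le_pos; [lra|]. apply Rlt_le, Rinv_0_lt_compat; lra.
    have hy1 : f0 / (f0 - f1) <= 1.
      apply (Rmult_le_reg_r (f1 - f0)); [lra|].
      have -> : f0 / (f0 - f1) * (f1 - f0) = - f0 by field; lra.
      lra.
    have : 0 <= f0 / (f0 - f1) * (f1 + g1) by apply Rmult_le_pos.
    have : 0 <= (1 - f0 / (f0 - f1)) * (f0 + g0) by apply Rmult_le_pos; lra.
    move=> ha hb. split; [lra|]. rewrite e2 e. split; lra.
- destruct (Rle_dec 0 g0) as [b0|b0].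
  + destruct (Rle_dec 0 f0) as [a0|a0].
    * exists 0; split; [lra|]; split; lra.
    * exfalso; apply hf; lra.
  + exists (g0 / (g0 - g1)).
    have hd : g0 - g1 < 0 by lra.
    have e : g0 / (g0 - g1) * g1 + (1 - g0 / (g0 - g1)) * g0 = 0 by field; lra.
    have e2 : g0 / (g0 - g1) * f1 + (1 - g0 / (g0 - g1)) * f0 =
              (g0 / (g0 - g1) * (f1 + g1) + (1 - g0 / (g0 - g1)) * (f0 + g0)) -
              (g0 / (g0 - g1) * g1 + (1 - g0 / (g0 - g1)) * g0) by ring.
    have hy0 : 0 <= g0 / (g0 - g1).
      have -> : g0 / (g0 - g1) = (- g0) * / (g1 - g0) by field; lra.
      apply Rmult_le_pos; [lra|]. apply Rlt_le, Rinv_0_lt_compat; lra.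
    have hy1 : g0 / (g0 - g1) <= 1.
      apply (Rmult_le_reg_r (g1 - g0)); [lra|].
      have -> : g0 / (g0 - g1) * (g1 - g0) = - g0 by field; lra.
      lra.
    have : 0 <= g0 / (g0 - g1) * (f1 + g1) by apply Rmult_le_pos.
    have : 0 <= (1 - g0 / (g0 - g1)) * (f0 + g0) by apply Rmult_le_pos; lra.
    move=> ha hb. split; [lra|]. rewrite e2 e. split; lra.
- exfalso; destruct (Rle_dec 0 f0); destruct (Rle_dec 0 g0);
    first [lra | (apply hf; lra) | (apply hg; lra)].
Qed.

Definition tmin (T : trapezoid) := Rmin (top1 T) (top2 T).
Definition tmax (T : trapezoid) := Rmax (top1 T) (top2 T).
Definition bmin (T : trapezoid) := Rmin (bot1 T) (bot2 T).
Definition bmax (T : trapezoid) := Rmax (bot1 T) (bot2 T).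
Definition rleft (T U : trapezoid) : Prop := tmax T < tmin U /\ bmax T < bmin U.

Lemma minmax_facts (a b : R) :
  Rmin a b <= a /\ Rmin a b <= b /\ a <= Rmax a b /\ b <= Rmax a b /\
  (Rmin a b = a /\ Rmax a b = b \/ Rmin a b = b /\ Rmax a b = a).
Proof.
split; [apply Rmin_l|]; split; [apply Rmin_r|]; split; [apply Rmax_l|]; split; [apply Rmax_r|].
destruct (Rle_dec a b).
- left; split; [apply Rmin_left|apply Rmax_right]; lra.
- right; split; [apply Rmin_right|apply Rmax_left]; lra.
Qed.

Lemma in_trap_bounds T x y : in_trapezoid T (x, y) ->
  0 <= y <= 1 /\ y * tmin T + (1 - y) * bmin T <= x <= y * tmax T + (1 - y) * bmax T.
Proof.
case=> [l1 [l2 [l3 [l4 [h1 [h2 [h3 [h4 [hs [hx hy]]]]]]]]]].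
simpl in hx, hy.
have [m1 [m2 [m3 [m4 _]]]] := minmax_facts (top1 T) (top2 T).
have [n1 [n2 [n3 [n4 _]]]] := minmax_facts (bot1 T) (bot2 T).
rewrite /tmin /tmax /bmin /bmax.
have ey : y = l1 + l2 by lra.
have e1y : 1 - y = l3 + l4 by lra.
rewrite e1y ey hx.
split; [lra|]. split; nra.
Qed.

Lemma seg_param (x lo hi : R) : lo <= x <= hi ->
  exists s, 0 <= s <= 1 /\ x = (1 - s) * lo + s * hi.
Proof.
move=> hx.
destruct (Req_dec hi lo) as [e|ne].
- exists 0; split; [lra|]. lra.
- exists ((x - lo) / (hi - lo)).
  have hp : 0 < hi - lo by lra.
  split; [split|].
  + apply Rmult_le_pos; [lra|]. apply Rlt_le, Rinv_0_lt_compat; lra.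
  + apply (Rmult_le_reg_r (hi - lo)); [lra|].
    have -> : (x - lo) / (hi - lo) * (hi - lo) = x - lo by field; lra.
    lra.
  + field; lra.
Qed.

Lemma in_trap_of T x y : 0 <= y <= 1 ->
  y * tmin T + (1 - y) * bmin T <= x <= y * tmax T + (1 - y) * bmax T ->
  in_trapezoid T (x, y).
Proof.
move=> hy hx.
have [s [hs ex]] := seg_param hx.
have [_ [_ [_ [_ ht]]]] := minmax_facts (top1 T) (top2 T).
have [_ [_ [_ [_ hb]]]] := minmax_facts (bot1 T) (bot2 T).
rewrite /tmin /tmax /bmin /bmax in ex.
have p1 : 0 <= y * (1 - s) by apply Rmult_le_pos; lra.
have p2 : 0 <= y * s by apply Rmult_le_pos; lra.
have p3 : 0 <= (1 - y) * (1 - s) by apply Rmult_le_pos; lra.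
have p4 : 0 <= (1 - y) * s by apply Rmult_le_pos; lra.
rewrite /in_trapezoid /=.
destruct ht as [[et1 et2]|[et1 et2]]; destruct hb as [[eb1 eb2]|[eb1 eb2]];
  rewrite et1 et2 eb1 eb2 in ex.
- exists (y * (1 - s)), (y * s), ((1 - y) * (1 - s)), ((1 - y) * s).
  do 4 (split; [assumption|]). split; [ring|]. split; [rewrite ex; ring|ring].
- exists (y * (1 - s)), (y * s), ((1 - y) * s), ((1 - y) * (1 - s)).
  do 4 (split; [assumption|]). split; [ring|]. split; [rewrite ex; ring|ring].
- exists (y * s), (y * (1 - s)), ((1 - y) * (1 - s)), ((1 - y) * s).
  do 4 (split; [assumption|]). split; [ring|]. split; [rewrite ex; ring|ring].
- exists (y * s), (y * (1 - s)), ((1 - y) * s), ((1 - y) * (1 - s)).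
  do 4 (split; [assumption|]). split; [ring|]. split; [rewrite ex; ring|ring].
Qed.

Lemma sep_contra y x p q r s : 0 <= y <= 1 -> x <= y * p + (1 - y) * q ->
  y * r + (1 - y) * s <= x -> p < r -> q < s -> False.
Proof.
move=> hy h1 h2 h3 h4.
have a : 0 <= y * (r - p) by apply Rmult_le_pos; lra.
have b : 0 <= (1 - y) * (s - q) by apply Rmult_le_pos; lra.
destruct (Req_dec y 0) as [e|ne].
- subst y. lra.
- have c : 0 < y * (r - p) by apply Rmult_lt_0_compat; lra.
  lra.
Qed.

Lemma geom T U :
  trapezoids_intersect T U <-> (~ rleft T U /\ ~ rleft U T).
Proof.
have [m1 [m2 [m3 [m4 _]]]] := minmax_facts (top1 T) (top2 T).
have [n1 [n2 [n3 [n4 _]]]] := minmax_facts (bot1 T) (bot2 T).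
have [m1' [m2' [m3' [m4' _]]]] := minmax_facts (top1 U) (top2 U).
have [n1' [n2' [n3' [n4' _]]]] := minmax_facts (bot1 U) (bot2 U).
rewrite /rleft /tmin /tmax /bmin /bmax in m1 m2 m3 m4 n1 n2 n3 n4 m1' m2' m3' m4' n1' n2' n3' n4' *.
split.
- case=> [[x y] [hT hU]].
  have [hy [a1 a2]] := in_trap_bounds hT.
  have [_ [b1 b2]] := in_trap_bounds hU.
  rewrite /tmin /tmax /bmin /bmax in a1 a2 b1 b2.
  split; move=> [c1 c2].
  - exact: (sep_contra hy a2 b1 c1 c2).
  - exact: (sep_contra hy b2 a1 c1 c2).
- case=> [h1 h2].
  have [y [hy [hf hg]]] :=
    @lin_exists (bmax T - bmin U) (tmax T - tmin U) (bmax U - bmin T) (tmax U - tmin T)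
      ltac:(rewrite /tmin /tmax /bmin /bmax; lra) ltac:(rewrite /tmin /tmax /bmin /bmax; lra)
      ltac:(rewrite /tmin /tmax /bmin /bmax; lra) ltac:(rewrite /tmin /tmax /bmin /bmax; lra).
  rewrite /tmin /tmax /bmin /bmax in hf hg.
  set loT := y * tmin T + (1 - y) * bmin T.
  set loU := y * tmin U + (1 - y) * bmin U.
  exists (Rmax loT loU, y).
  have [k1 [k2 [k3 [k4 k5]]]] := minmax_facts loT loU.
  have q1 : 0 <= y * (tmax T - tmin T) by apply Rmult_le_pos; rewrite /tmin /tmax; lra.
  have q2 : 0 <= (1 - y) * (bmax T - bmin T) by apply Rmult_le_pos; rewrite /bmin /bmax; lra.
  have q3 : 0 <= y * (tmax U - tmin U) by apply Rmult_le_pos; rewrite /tmin /tmax; lra.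
  have q4 : 0 <= (1 - y) * (bmax U - bmin U) by apply Rmult_le_pos; rewrite /bmin /bmax; lra.
  rewrite /loT /loU /tmin /tmax /bmin /bmax in k1 k2 k3 k4 k5 q1 q2 q3 q4 *.
  split; apply in_trap_of => //; rewrite /tmin /tmax /bmin /bmax;
    destruct k5 as [[e1 e2]|[e1 e2]]; rewrite e2; split; nra.
Qed.

Local Close Scope R_scope.


Definition fld (c : certificate) (i : nat) : nat := nth 0 (decl 12 c) i.
Definition fA c := fld c 0.
Definition fB c := fld c 1.
Definition fC c := fld c 2.
Definition fD c := fld c 3.
Definition fL c := fld c 4.
Definition fpL c := fld c 5.
Definition fR c := fld c 6.
Definition fpR c := fld c 7.
Definition fr c := fld c 8.
Definition fnp c := fld c 9.
Definition fs c := fld c 10.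
Definition fpar c := fld c 11.

Definition lefto (x y : certificate) : bool := (fB x < fA y) && (fD x < fC y).
Definition incomp (x y : certificate) : bool := ~~ lefto x y && ~~ lefto y x.

Definition V (k : nat) : verifier := fun N i c view =>
  let M := (N ^ k).+1 in
  let isn := fun j : 'I_M => view (nat_of_ord j) != None in
  let cf := fun j : 'I_M => odflt [::] (view (nat_of_ord j)) in
  [&& fA c <= fB c, fC c <= fD c,
   [forall j, isn j ==> [&& incomp c (cf j), fr (cf j) == fr c & fnp (cf j) == fnp c]],
   (0 < fL c) ==> [exists j, [&& isn j, nat_of_ord j == fpL c, fL (cf j) < fL c,
                                 fA (cf j) <= fA c & fC (cf j) <= fC c]],
   [forall j, [&& isn j, 0 < fL (cf j) & fpL (cf j) == i] ==>
        (fL (cf j) <= fL c + \sum_(j' | isn j' && lefto (cf j') (cf j)) 1)],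
   (0 < fR c) ==> [exists j, [&& isn j, nat_of_ord j == fpR c, fR (cf j) < fR c,
                                 fB c <= fB (cf j) & fD c <= fD (cf j)]],
   [forall j, [&& isn j, 0 < fR (cf j) & fpR (cf j) == i] ==>
        (fR (cf j) <= fR c + \sum_(j' | isn j' && lefto (cf j) (cf j')) 1)],
   (\sum_(j | isn j) 1) + fL c + fR c + 1 == fnp c,
   (i == fr c) ==> (fs c == fnp c),
   (i != fr c) ==> [exists j, isn j && (nat_of_ord j == fpar c)]
   & fs c == 1 + \sum_(j | [&& isn j, fpar (cf j) == i & nat_of_ord j != fr c]) fs (cf j)].

Lemma view_some n (e : rel 'I_n) (id : 'I_n -> nat) (c : 'I_n -> certificate) v j x :
  neighbour_view e id c v j = Some x -> exists u, [/\ e v u, id u = j & x = c u].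
Proof.
rewrite /neighbour_view; case: pickP => // u /andP[h1 /eqP h2] [<-].
by exists u.
Qed.

Lemma view_id n (e : rel 'I_n) (id : 'I_n -> nat) (c : 'I_n -> certificate) v u :
  injective id ->
  neighbour_view e id c v (id u) = if e v u then Some (c u) else None.
Proof.
move=> inj; rewrite /neighbour_view; case: pickP => [u' /andP[h1 /eqP h2]|h].
  by move: (inj _ _ h2) h1 => -> ->.
case: ifP => // evu; move: (h u); by rewrite evu eqxx.
Qed.

Lemma view_none n (e : rel 'I_n) (id : 'I_n -> nat) (c : 'I_n -> certificate) v j :
  (forall u, e v u -> id u != j) -> neighbour_view e id c v j = None.
Proof.
move=> h; rewrite /neighbour_view; case: pickP => // u /andP[h1 /eqP h2].
by move: (h u h1); rewrite h2 eqxx.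
Qed.

Definition idO n M (id : 'I_n -> nat) (hM : forall u, id u < M) (u : 'I_n) : 'I_M :=
  Ordinal (hM u).

Lemma forall_view n M (e : rel 'I_n) (id : 'I_n -> nat) (c : 'I_n -> certificate) v
  (hM : forall u, id u < M) (P : certificate -> bool) :
  injective id ->
  [forall j : 'I_M, (neighbour_view e id c v j != None) ==>
                     P (odflt [::] (neighbour_view e id c v j))]
  = [forall u, e v u ==> P (c u)].
Proof.
move=> inj; apply/forallP/forallP => h u.
  move: (h (idO hM u)); rewrite /= view_id //.
  by case: (e v u).
case E: (neighbour_view e id c v u) => [x|] //=.
have [w [h1 h2 ->]] := view_some E.
by move: (h w); rewrite h1.
Qed.

Lemma exists_view n M (e : rel 'I_n) (id : 'I_n -> nat) (c : 'I_n -> certificate) v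
  (hM : forall u, id u < M) (P : nat -> certificate -> bool) :
  injective id ->
  [exists j : 'I_M, (neighbour_view e id c v j != None) &&
                     P j (odflt [::] (neighbour_view e id c v j))]
  = [exists u, e v u && P (id u) (c u)].
Proof.
move=> inj; apply/existsP/existsP => [[j]|[u]].
  case E: (neighbour_view e id c v j) => [x|] //= hp.
  have [w [h1 h2 e3]] := view_some E.
  by exists w; rewrite h1 h2 -e3.
move=> /andP[h1 h2]; exists (idO hM u); by rewrite /= view_id // h1.
Qed.

Lemma sum_view n M (e : rel 'I_n) (id : 'I_n -> nat) (c : 'I_n -> certificate) v
  (hM : forall u, id u < M) (P : nat -> certificate -> bool) (g : certificate -> nat) :
  injective id ->
  \sum_(j : 'I_M | (neighbour_view e id c v j != None) &&
                     P j (odflt [::] (neighbour_view e id c v j)))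
      g (odflt [::] (neighbour_view e id c v j))
  = \sum_(u | e v u && P (id u) (c u)) g (c u).
Proof.
move=> inj.
have injO : injective (idO hM).
  by move=> a b /(congr1 val) /= /inj.
set G := fun j : 'I_M => g (odflt [::] (neighbour_view e id c v j)).
set S := [set u | e v u && P (id u) (c u)].
transitivity (\sum_(u in S) G (idO hM u)); last first.
  rewrite /S; apply: eq_big => [u|u]; first by rewrite inE.
  by rewrite inE /G /= view_id // => /andP[-> _].
rewrite -(big_imset _ (in2W injO)) /=.
apply: eq_bigl => j; apply/idP/imsetP.
  case E: (neighbour_view e id c v j) => [x|] //= hp.
  have [w [h1 h2 e3]] := view_some E.
  exists w; first by rewrite inE h1 h2 -e3.
  by apply: val_inj; rewrite /= h2.
case=> u; rewrite inE => /andP[h1 h2] ->.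
by rewrite /= view_id // h1.
Qed.


Lemma id_bound k n N (id : 'I_n -> nat) : n <= N -> (forall v, 1 <= id v <= n ^ k) ->
  forall u, id u < (N ^ k).+1.
Proof.
move=> hnN hid u; rewrite ltnS; case/andP: (hid u) => _ h.
apply: (leq_trans h); case: k {h hid} => [|k]; first by rewrite !expn0.
by rewrite leq_exp2r.
Qed.

Record acc_props n (e : rel 'I_n) (id : 'I_n -> nat) (c : 'I_n -> certificate) (v : 'I_n) : Prop := {
  pa1 : fA (c v) <= fB (c v);
  pa2 : fC (c v) <= fD (c v);
  pb : forall u, e v u -> [&& incomp (c v) (c u), fr (c u) == fr (c v) & fnp (c u) == fnp (c v)];
  pc : 0 < fL (c v) -> exists u, e v u /\ [&& id u == fpL (c v), fL (c u) < fL (c v),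
                                 fA (c u) <= fA (c v) & fC (c u) <= fC (c v)];
  pd : forall u, e v u -> 0 < fL (c u) -> fpL (c u) = id v ->
         fL (c u) <= fL (c v) + #|[set w | e v w && lefto (c w) (c u)]|;
  pe : 0 < fR (c v) -> exists u, e v u /\ [&& id u == fpR (c v), fR (c u) < fR (c v),
                                 fB (c v) <= fB (c u) & fD (c v) <= fD (c u)];
  pf : forall u, e v u -> 0 < fR (c u) -> fpR (c u) = id v ->
         fR (c u) <= fR (c v) + #|[set w | e v w && lefto (c u) (c w)]|;
  pg : #|[set u | e v u]| + fL (c v) + fR (c v) + 1 = fnp (c v);
  ph : id v = fr (c v) -> fs (c v) = fnp (c v);
  pi : id v <> fr (c v) -> exists u, e v u /\ id u = fpar (c v);
  pj : fs (c v) = 1 + \sum_(u | [&& e v u, fpar (c u) == id v & id u != fr (c v)]) fs (c u)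
}.

Lemma unpack k n N (e : rel 'I_n) (id : 'I_n -> nat) (c : 'I_n -> certificate) v :
  injective id -> (forall u, id u < (N ^ k).+1) ->
  accepts_at (V k) N e id c v -> acc_props e id c v.
Proof.
move=> inj hM.
rewrite /accepts_at /V.
set M := (N ^ k).+1.
set vw := neighbour_view e id c v.
move=> /andP[h1 /andP[h2 /andP[h3 /andP[h4 /andP[h5 /andP[h6 /andP[h7
          /andP[h8 /andP[h9 /andP[h10 h11]]]]]]]]]].
have sview : forall (P : nat -> certificate -> bool) (g : certificate -> nat),
    \sum_(j : 'I_M | (vw j != None) && P j (odflt [::] (vw j))) g (odflt [::] (vw j))
    = \sum_(u | e v u && P (id u) (c u)) g (c u).
  by move=> P g; apply: sum_view.
split => //.
- move=> u evu; move/forallP: h3 => /(_ (idO hM u)).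
  by rewrite /vw /= view_id // evu.
- move=> hL; move/implyP: h4 => /(_ hL) /existsP[j].
  case E: (vw j) => [x|] //= /and4P[/eqP hj hl ha hc].
  have [u [h1' h2' ex]] := view_some E; subst x.
  by exists u; split => //; rewrite h2' hj eqxx hl ha hc.
- move=> u evu hL hp; move/forallP: h5 => /(_ (idO hM u)).
  rewrite /vw /= view_id // evu /= hL hp eqxx /=.
  have := sview (fun _ x => lefto x (c u)) (fun _ => 1).
  rewrite /vw => ->.
  by rewrite sum1dep_card.
- move=> hR; move/implyP: h6 => /(_ hR) /existsP[j].
  case E: (vw j) => [x|] //= /and4P[/eqP hj hl ha hc].
  have [u [h1' h2' ex]] := view_some E; subst x.
  by exists u; split => //; rewrite h2' hj eqxx hl ha hc.
- move=> u evu hR hp; move/forallP: h7 => /(_ (idO hM u)).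
  rewrite /vw /= view_id // evu /= hR hp eqxx /=.
  have := sview (fun _ x => lefto (c u) x) (fun _ => 1).
  rewrite /vw => ->.
  by rewrite sum1dep_card.
- move/eqP: h8 <-.
  have := sview (fun _ _ => true) (fun _ => 1).
  rewrite /vw => /=.
  rewrite (eq_bigl (fun j : 'I_M => vw j != None)); last by move=> j; rewrite andbT.
  rewrite /vw => ->.
  rewrite sum1dep_card.
  have -> : [set x | e v x & true] = [set u | e v u] by apply/setP => u; rewrite !inE andbT.
  done.
- by move=> hr; move/implyP: h9; rewrite hr eqxx => /(_ isT) /eqP.
- move=> hr; move/implyP: h10; rewrite (introN eqP hr) => /(_ isT) /existsP[j].
  case E: (vw j) => [x|] //= /eqP hj.
  have [u [h1' h2' ex]] := view_some E; subst x.
  by exists u; split => //; rewrite h2' hj.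
- move/eqP: h11 => ->; congr (_ + _).
  have := sview (fun j x => (fpar x == id v) && (j != fr (c v))) fs.
  rewrite /vw => <-.
  by apply: eq_bigl => j; rewrite andbA.
Qed.

Lemma nat_sum_card n (b : pred 'I_n) : \sum_(u : 'I_n) (b u : nat) = #|[set u | b u]|.
Proof.
rewrite -sum1dep_card [RHS]big_mkcond /=; apply: eq_bigr => u _; by case: (b u).
Qed.

Lemma sound_comb k n N (e : rel 'I_n) (id : 'I_n -> nat) (c : 'I_n -> certificate) :
  @admissible k n N e id -> (forall v, accepts_at (V k) N e id c v) ->
  (forall v, fA (c v) <= fB (c v) /\ fC (c v) <= fD (c v)) /\
  (forall u v, u != v -> (e u v <-> incomp (c u) (c v))).
Proof.
case=> hn [[sym irr] [conn [inj [hid /andP[hnN _]]]]] acc.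
have hM := @id_bound k n N id hnN hid.
have P : forall v, acc_props e id c v by move=> v; apply: unpack (acc v).
have box : forall v, fA (c v) <= fB (c v) /\ fC (c v) <= fD (c v).
  by move=> v; split; [apply: (pa1 (P v))|apply: (pa2 (P v))].
split => //.
set v0 : 'I_n := Ordinal hn.
have agree : forall (f : certificate -> nat),
    (forall x y, e x y -> f (c y) = f (c x)) -> forall v, f (c v) = f (c v0).
  move=> f hf v.
  have cl : closed e [pred x | f (c x) == f (c v0)].
    move=> x y exy; by rewrite !inE (hf x y exy).
  have := closed_connect cl (conn v0 v); rewrite !inE eqxx => /esym/eqP //.
have agr : forall v, fr (c v) = fr (c v0).
  apply: agree => x y exy; by case/and3P: (pb (P x) exy) => _ /eqP -> _.
have agn : forall v, fnp (c v) = fnp (c v0).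
  apply: agree => x y exy; by case/and3P: (pb (P x) exy) => _ _ /eqP ->.
set r := fr (c v0).
have hsum : \sum_(v : 'I_n) fs (c v) =
            n + \sum_(u | id u != r) fs (c u).
  rewrite (eq_bigr _ (fun v _ => pj (P v))) big_split /= sum1_card card_ord.
  congr (_ + _).
  rewrite (eq_bigr (fun v => \sum_u (if [&& e v u, fpar (c u) == id v & id u != fr (c v)]
                                      then fs (c u) else 0))); last first.
    by move=> v _; rewrite big_mkcond.
  rewrite exchange_big /= [RHS]big_mkcond /=.
  apply: eq_bigr => u _.
  case: (boolP (id u != r)) => hu.
  - have hne : id u <> fr (c u) by move=> h; rewrite agr in h; move: hu; rewrite h eqxx.
    have [w [ew hw]] := pi (P u) hne.
    rewrite (bigD1 w) //= big1 ?addn0.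
      by rewrite (sym w u) ew hw eqxx agr hu.
    move=> x hx; case: ifP => // /and3P[exu /eqP hfx _].
    by move: hx; rewrite (inj x w) ?eqxx // hw -hfx.
  - rewrite big1 // => x _; case: ifP => // /and3P[_ _].
    by rewrite agr (negbTE hu).
have hroot : \sum_(v | id v == r) fs (c v) = n.
  move: hsum; rewrite (bigID (fun v => id v == r)) /=.
  by move/eqP; rewrite eqn_add2r => /eqP.
have [v1 hv1] : exists v1, id v1 == r.
  apply/existsP; apply: contraT; rewrite negb_exists => /forallP hno.
  move: hroot; rewrite big_pred0 => [h|v]; first by have := hn; rewrite -{1}h.
  by apply/negbTE/hno.
have np_n : forall v, fnp (c v) = n.
  move=> v; rewrite agn -(agn v1) -(ph (P v1)); last by rewrite (eqP hv1) agr.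
  rewrite -hroot (big_pred1 v1) // => x; rewrite /= -(eqP hv1).
  by apply/eqP/eqP => [/inj|->].
have lowL : forall v, fL (c v) <= #|[set u | lefto (c u) (c v)]|.
  suff : forall m v, fL (c v) < m -> fL (c v) <= #|[set u | lefto (c u) (c v)]|.
    by move=> h v; apply: (h (fL (c v)).+1).
  elim=> [|m IH] v hm //.
  case: (posnP (fL (c v))) => [-> //|hpos].
  have [w [evw /and4P[/eqP hw hlw haw hcw]]] := pc (P v) hpos.
  have := pd (P w) (u := v); rewrite sym evw hpos hw => /(_ isT isT erefl) h1.
  have h2 := IH w ltac:(lia).
  apply: (leq_trans h1); apply: (leq_trans (leq_add h2 (leqnn _))).
  rewrite -cardsUI.
  have -> : [set u | lefto (c u) (c w)] :&: [set x | e w x && lefto (c x) (c v)] = set0.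
    apply/setP => x; rewrite !inE; apply/negbTE; apply/andP => [[h3 /andP[h4 _]]].
    by case/and3P: (pb (P w) h4) => /andP[_ /negP] //.
  rewrite cards0 addn0; apply: subset_leq_card; apply/subsetP => x.
  rewrite !inE => /orP[|/andP[_ //]].
  rewrite /lefto => /andP[h3 h4]; apply/andP; split; lia.
have lowR : forall v, fR (c v) <= #|[set u | lefto (c v) (c u)]|.
  suff : forall m v, fR (c v) < m -> fR (c v) <= #|[set u | lefto (c v) (c u)]|.
    by move=> h v; apply: (h (fR (c v)).+1).
  elim=> [|m IH] v hm //.
  case: (posnP (fR (c v))) => [-> //|hpos].
  have [w [evw /and4P[/eqP hw hlw haw hcw]]] := pe (P v) hpos.
  have := pf (P w) (u := v); rewrite sym evw hpos hw => /(_ isT isT erefl) h1.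
  have h2 := IH w ltac:(lia).
  apply: (leq_trans h1); apply: (leq_trans (leq_add h2 (leqnn _))).
  rewrite -cardsUI.
  have -> : [set u | lefto (c w) (c u)] :&: [set x | e w x && lefto (c v) (c x)] = set0.
    apply/setP => x; rewrite !inE; apply/negbTE; apply/andP => [[h3 /andP[h4 _]]].
    by case/and3P: (pb (P w) h4) => /andP[/negP] //.
  rewrite cards0 addn0; apply: subset_leq_card; apply/subsetP => x.
  rewrite !inE => /orP[|/andP[_ //]].
  rewrite /lefto => /andP[h3 h4]; apply/andP; split; lia.
have NGH : forall v, [set u | e v u] = [set u | (u != v) && incomp (c v) (c u)].
  move=> v.
  have sub : [set u | e v u] \subset [set u | (u != v) && incomp (c v) (c u)].
    apply/subsetP => u; rewrite !inE => evu.
    case/and3P: (pb (P v) evu) => -> _ _; rewrite andbT.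
    by apply/eqP => euv; move: evu; rewrite euv irr.
  apply/eqP; rewrite eqEcard sub /=.
  have part : forall u, (u == v) + lefto (c u) (c v) + lefto (c v) (c u)
                        + ((u != v) && incomp (c v) (c u)) = 1.
    move=> u; have [a1 c1] := box u; have [a2 c2] := box v.
    case: (eqVneq u v) => [->|huv] /=.
      by rewrite /lefto /incomp; case: ltnP; case: ltnP => //=; lia.
    rewrite /incomp /lefto.
    case h1: (fB (c u) < fA (c v)); case h2: (fD (c u) < fC (c v));
    case h3: (fB (c v) < fA (c u)); case h4: (fD (c v) < fC (c u)) => //=; lia.
  have hn2 : n = 1 + #|[set u | lefto (c u) (c v)]| + #|[set u | lefto (c v) (c u)]|
                 + #|[set u | (u != v) && incomp (c v) (c u)]|.
    have e1 : \sum_(u : 'I_n) 1 = n.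
      by rewrite (sum1dep_card (fun _ => true)) cardsT card_ord.
    rewrite -{1}e1.
    rewrite (eq_bigr _ (fun u _ => esym (part u))) !big_split /= !nat_sum_card.
    congr (_ + _ + _ + _).
    rewrite -(cards1 v); apply: eq_card => u; by rewrite !inE.
  have := pg (P v); rewrite np_n => hg.
  have := lowL v; have := lowR v. move: hn2 hg. set NH := #|[set u | (u != v) && incomp (c v) (c u)]|. set NG := #|[set u | e v u]|. set LL := #|[set u | lefto (c u) (c v)]|. set RR := #|[set u | lefto (c v) (c u)]|. lia.
move=> u v huv; split => [euv|hi].
  by case/and3P: (pb (P u) euv).
have : v \in [set x | (x != u) && incomp (c u) (c x)] by rewrite inE eq_sym huv hi.
by rewrite -NGH inE.
Qed.


Lemma bigmax_attained (I : finType) (P : pred I) (F : I -> nat) :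
  0 < \max_(i | P i) F i -> exists i, P i /\ F i = \max_(i | P i) F i.
Proof.
case: (pickP P) => [i0 Pi0|none].
  rewrite (bigmax_eq_arg _ Pi0) => _.
  case: arg_maxnP => // i Pi _; by exists i.
by rewrite big_pred0.
Qed.

Lemma poset_parent n (e : rel 'I_n) (lt : rel 'I_n) :
  (forall u v, e u v = e v u) -> (forall v, e v v = false) -> connected_graph e ->
  (forall v, lt v v = false) -> (forall u v w, lt u v -> lt v w -> lt u w) ->
  (forall u v, u != v -> e u v = ~~ lt u v && ~~ lt v u) ->
  forall v x0, lt x0 v ->
  exists w, e v w /\ [set x | lt x w] \proper [set x | lt x v].
Proof.
move=> sym irr conn ltirr lttr adj v x0 hx0.
set X := [set x | lt x v].
have : [exists z, [exists y, [&& e z y, z \in X & y \notin X]]].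
  apply: contraT; rewrite negb_exists => /forallP hno.
  have cl : closed e (mem X).
    move=> a b eab.
    case aX: (a \in X); case bX: (b \in X) => //.
      by move: (hno a); rewrite negb_exists => /forallP /(_ b); rewrite eab aX bX.
    by move: (hno b); rewrite negb_exists => /forallP /(_ a); rewrite sym eab aX bX.
  have := closed_connect cl (conn x0 v).
  by rewrite !inE hx0 ltirr.
case/existsP => z /existsP[y /and3P[ezy zX yX]].
move: zX yX; rewrite !inE => lzv nlyv.
have ezy' : ~~ lt z y.
  have zy : z != y by apply/eqP => h; move: ezy; rewrite h irr.
  by move: ezy; rewrite (adj _ _ zy) => /andP[].
have nlvy : ~~ lt v y by apply/negP => h; move/negP: ezy'; apply; exact: lttr lzv h.
have yv : y != v by apply/eqP => h; move: ezy'; rewrite h lzv.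
have evy : e v y by rewrite adj 1?eq_sym // nlvy nlyv.
set S := fun w => e v w && ((w == y) || lt w y).
have Sy : S y by rewrite /S evy eqxx.
case: (arg_minnP (fun w => #|[set x | lt x w]|) Sy) => w /andP[evw hwy] wmin.
have lwy : forall s, lt s w -> lt s y.
  move=> s hs; case/orP: hwy => [/eqP <- //|h]; exact: lttr hs h.
exists w; split => //.
have vw : v != w by apply/eqP => h; move: evw; rewrite -h irr.
have [nlvw nlwv] : ~~ lt v w /\ ~~ lt w v by move: evw; rewrite adj // => /andP[].
rewrite properE; apply/andP; split.
  apply/subsetP => s; rewrite !inE => hs.
  apply: contraT => nsv.
  have nlvs : ~~ lt v s by apply/negP => h; move/negP: nlvw; apply; exact: lttr h hs.
  have sv : v != s by apply/eqP => h; move/negP: nlvw; apply; rewrite h.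
  have evs : e v s by rewrite adj // nlvs nsv.
  have Ss : S s by rewrite /S evs (lwy _ hs) orbT.
  have := wmin s Ss.
  have pr : [set x | lt x s] \proper [set x | lt x w].
    rewrite properE; apply/andP; split.
      apply/subsetP => x; rewrite !inE => hx; exact: lttr hx hs.
    apply/subsetPn; exists s; by rewrite !inE ?hs ?ltirr.
  by move=> h; have := proper_card pr; rewrite ltnNge h.
apply/subsetPn; exists z; rewrite !inE //.
by apply/negP => h; move/negP: ezy'; apply; exact: lwy.
Qed.


Definition rltb (a b : R) : bool := if Rlt_dec a b then true else false.
Lemma rltbP (a b : R) : reflect (Rlt a b) (rltb a b).
Proof. rewrite /rltb; case: Rlt_dec => h; by constructor. Qed.

Lemma tmin_le_tmax T : Rle (tmin T) (tmax T).
Proof. rewrite /tmin /tmax; have := Rmin_l (top1 T) (top2 T); have := Rmax_l (top1 T) (top2 T); lra. Qed.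
Lemma bmin_le_bmax T : Rle (bmin T) (bmax T).
Proof. rewrite /bmin /bmax; have := Rmin_l (bot1 T) (bot2 T); have := Rmax_l (bot1 T) (bot2 T); lra. Qed.

Definition rlt n (T : 'I_n -> trapezoid) (u v : 'I_n) : bool :=
  rltb (tmax (T u)) (tmin (T v)) && rltb (bmax (T u)) (bmin (T v)).

Lemma rltP n (T : 'I_n -> trapezoid) u v : reflect (rleft (T u) (T v)) (rlt T u v).
Proof.
rewrite /rlt /rleft; apply: (iffP andP) => [[/rltbP h1 /rltbP h2]|[h1 h2]]; split => //;
  by apply/rltbP.
Qed.

Lemma rlt_irr n (T : 'I_n -> trapezoid) v : rlt T v v = false.
Proof.
apply/negbTE/negP => /rltP [h _]; have := tmin_le_tmax (T v); lra.
Qed.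

Lemma rlt_trans n (T : 'I_n -> trapezoid) u v w : rlt T u v -> rlt T v w -> rlt T u w.
Proof.
move=> /rltP[h1 h2] /rltP[h3 h4]; apply/rltP.
have := tmin_le_tmax (T v); have := bmin_le_bmax (T v).
split; lra.
Qed.

Lemma rlt_adj n (e : rel 'I_n) (T : 'I_n -> trapezoid) :
  (forall u v, u != v -> (e u v <-> trapezoids_intersect (T u) (T v))) ->
  forall u v, u != v -> e u v = ~~ rlt T u v && ~~ rlt T v u.
Proof.
move=> hT u v huv; apply/idP/idP.
  move/(hT _ _ huv)/geom => [h1 h2].
  by apply/andP; split; apply/negP => /rltP.
move=> /andP[/negP h1 /negP h2]; apply/(hT _ _ huv)/geom.
by split => h; [apply: h1|apply: h2]; apply/rltP.
Qed.

Definition rb n (T : 'I_n -> trapezoid) (u : 'I_n) :=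
  #|[set x | rltb (tmax (T x)) (tmax (T u))]|.
Definition rd n (T : 'I_n -> trapezoid) (u : 'I_n) :=
  #|[set x | rltb (bmax (T x)) (bmax (T u))]|.

Definition cA n (T : 'I_n -> trapezoid) v := \max_(x | rlt T x v) (rb T x).*2.+2.
Definition cC n (T : 'I_n -> trapezoid) v := \max_(x | rlt T x v) (rd T x).*2.+2.
Definition cB n (T : 'I_n -> trapezoid) u :=
  (n.*2).+1 - \max_(y | rlt T u y) ((n.*2).+2 - cA T y).
Definition cD n (T : 'I_n -> trapezoid) u :=
  (n.*2).+1 - \max_(y | rlt T u y) ((n.*2).+2 - cC T y).

Lemma rank_lt n (f : 'I_n -> R) x u : Rlt (f x) (f u) ->
  #|[set y | rltb (f y) (f x)]| < #|[set y | rltb (f y) (f u)]|.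
Proof.
move=> h; apply: proper_card; rewrite properE; apply/andP; split.
  apply/subsetP => y; rewrite !inE => /rltbP h2; apply/rltbP; lra.
apply/subsetPn; exists x; rewrite !inE; [by apply/rltbP|].
by apply/rltbP; lra.
Qed.

Lemma rank_ge n (f : 'I_n -> R) x u :
  #|[set y | rltb (f y) (f u)]| <= #|[set y | rltb (f y) (f x)]| -> Rle (f u) (f x).
Proof.
move=> h; destruct (Rle_dec (f u) (f x)) as [|hn] => //.
have := rank_lt (f := f) (x := x) (u := u); rewrite ltnNge h => /(_ ltac:(lra)) //.
Qed.

Lemma rank_small n (f : 'I_n -> R) u : #|[set y | rltb (f y) (f u)]| < n.
Proof.
have pr : [set y | rltb (f y) (f u)] \proper [set: 'I_n].
  rewrite properE subsetT /=.
  apply/subsetPn; exists u; rewrite !inE //; by apply/rltbP; lra.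
by have := proper_card pr; rewrite cardsT card_ord.
Qed.

Lemma cA_ge n (T : 'I_n -> trapezoid) x v : rlt T x v -> (rb T x).*2.+2 <= cA T v.
Proof. move=> h; exact: (@leq_bigmax_cond _ (fun x => rlt T x v) (fun x => (rb T x).*2.+2) x h). Qed.
Lemma cC_ge n (T : 'I_n -> trapezoid) x v : rlt T x v -> (rd T x).*2.+2 <= cC T v.
Proof. move=> h; exact: (@leq_bigmax_cond _ (fun x => rlt T x v) (fun x => (rd T x).*2.+2) x h). Qed.

Lemma cA_le n (T : 'I_n -> trapezoid) v : cA T v <= (rb T v).*2.
Proof.
apply/bigmax_leqP => x /rltP [h _].
have := rank_lt (f := fun y => tmax (T y)) (x := x) (u := v).
have := tmin_le_tmax (T v).
rewrite /rb => h2 /(_ ltac:(lra)); lia.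
Qed.
Lemma cC_le n (T : 'I_n -> trapezoid) v : cC T v <= (rd T v).*2.
Proof.
apply/bigmax_leqP => x /rltP [_ h].
have := rank_lt (f := fun y => bmax (T y)) (x := x) (u := v).
have := bmin_le_bmax (T v).
rewrite /rd => h2 /(_ ltac:(lra)); lia.
Qed.

Lemma cA_small n (T : 'I_n -> trapezoid) v : cA T v <= n.*2.
Proof.
apply: leq_trans (cA_le T v) _.
have := rank_small (fun y => tmax (T y)) v; rewrite -/(rb T v); lia.
Qed.
Lemma cC_small n (T : 'I_n -> trapezoid) v : cC T v <= n.*2.
Proof.
apply: leq_trans (cC_le T v) _.
have := rank_small (fun y => bmax (T y)) v; rewrite -/(rd T v); lia.
Qed.

Lemma cB_le n (T : 'I_n -> trapezoid) u y : rlt T u y -> cB T u < cA T y.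
Proof.
move=> h; rewrite /cB.
have := @leq_bigmax_cond _ (fun y => rlt T u y) (fun y => (n.*2).+2 - cA T y) y h.
have := cA_ge h; have := cA_small T y; lia.
Qed.
Lemma cD_le n (T : 'I_n -> trapezoid) u y : rlt T u y -> cD T u < cC T y.
Proof.
move=> h; rewrite /cD.
have := @leq_bigmax_cond _ (fun y => rlt T u y) (fun y => (n.*2).+2 - cC T y) y h.
have := cC_ge h; have := cC_small T y; lia.
Qed.

Lemma cB_ge n (T : 'I_n -> trapezoid) v : (rb T v).*2.+1 <= cB T v.
Proof.
rewrite /cB.
have : \max_(y | rlt T v y) ((n.*2).+2 - cA T y) <= n.*2 - (rb T v).*2.
  apply/bigmax_leqP => y h; have := cA_ge h; lia.
have := rank_small (fun y => tmax (T y)) v; rewrite -/(rb T v); lia.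
Qed.
Lemma cD_ge n (T : 'I_n -> trapezoid) v : (rd T v).*2.+1 <= cD T v.
Proof.
rewrite /cD.
have : \max_(y | rlt T v y) ((n.*2).+2 - cC T y) <= n.*2 - (rd T v).*2.
  apply/bigmax_leqP => y h; have := cC_ge h; lia.
have := rank_small (fun y => bmax (T y)) v; rewrite -/(rd T v); lia.
Qed.

Lemma cAB n (T : 'I_n -> trapezoid) v : cA T v <= cB T v.
Proof. have := cA_le T v; have := cB_ge T v; lia. Qed.
Lemma cCD n (T : 'I_n -> trapezoid) v : cC T v <= cD T v.
Proof. have := cC_le T v; have := cD_ge T v; lia. Qed.

Lemma cB_small n (T : 'I_n -> trapezoid) v : cB T v <= (n.*2).+1.
Proof. rewrite /cB; lia. Qed.
Lemma cD_small n (T : 'I_n -> trapezoid) v : cD T v <= (n.*2).+1.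
Proof. rewrite /cD; lia. Qed.

Lemma top_from n (T : 'I_n -> trapezoid) u v : cB T u < cA T v ->
  Rlt (tmax (T u)) (tmin (T v)).
Proof.
move=> h.
have hpos : 0 < \max_(y | rlt T u y) ((n.*2).+2 - cA T y).
  move: h; rewrite /cB; have := cA_small T v; lia.
have [y [huy hy]] := bigmax_attained hpos.
have hAy : cA T y <= cA T v.
  move: h; rewrite /cB -hy; have := cA_small T v; have := cA_small T y; have := cA_ge huy; lia.
have hApos : 0 < cA T v by have := cA_ge huy; lia.
have [x0 [hx0 ex0]] := bigmax_attained hApos.
have hr : rb T u <= rb T x0.
  have := cA_ge huy; rewrite /cA in hAy ex0 * ; rewrite -ex0 in hAy; lia.
have := rank_ge (f := fun y => tmax (T y)) (x := x0) (u := u) hr.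
move/rltP: hx0 => [h1 _]; lra.
Qed.
Lemma bot_from n (T : 'I_n -> trapezoid) u v : cD T u < cC T v ->
  Rlt (bmax (T u)) (bmin (T v)).
Proof.
move=> h.
have hpos : 0 < \max_(y | rlt T u y) ((n.*2).+2 - cC T y).
  move: h; rewrite /cD; have := cC_small T v; lia.
have [y [huy hy]] := bigmax_attained hpos.
have hAy : cC T y <= cC T v.
  move: h; rewrite /cD -hy; have := cC_small T v; have := cC_small T y; have := cC_ge huy; lia.
have hApos : 0 < cC T v by have := cC_ge huy; lia.
have [x0 [hx0 ex0]] := bigmax_attained hApos.
have hr : rd T u <= rd T x0.
  have := cC_ge huy; rewrite /cC in hAy ex0 * ; rewrite -ex0 in hAy; lia.
have := rank_ge (f := fun y => bmax (T y)) (x := x0) (u := u) hr.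
move/rltP: hx0 => [_ h1]; lra.
Qed.

Lemma coord_lt n (T : 'I_n -> trapezoid) u v :
  (cB T u < cA T v) && (cD T u < cC T v) = rlt T u v.
Proof.
apply/idP/idP.
  move=> /andP[h1 h2]; apply/rltP; split; [exact: top_from|exact: bot_from].
by move=> h; rewrite (cB_le h) (cD_le h).
Qed.

Lemma cA_mono n (T : 'I_n -> trapezoid) w v :
  [set x | rlt T x w] \subset [set x | rlt T x v] -> cA T w <= cA T v /\ cC T w <= cC T v.
Proof.
move=> /subsetP s; split; apply/bigmax_leqP => x hx;
  [apply: cA_ge|apply: cC_ge]; by move: (s x); rewrite !inE => /(_ hx).
Qed.

Lemma cB_mono n (T : 'I_n -> trapezoid) w v :
  [set y | rlt T w y] \subset [set y | rlt T v y] -> cB T v <= cB T w /\ cD T v <= cD T w.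
Proof.
move=> /subsetP s; rewrite /cB /cD; split.
  suff : \max_(y | rlt T w y) ((n.*2).+2 - cA T y) <= \max_(y | rlt T v y) ((n.*2).+2 - cA T y) by lia.
  apply/bigmax_leqP => y hy; apply: leq_bigmax_cond; by move: (s y); rewrite !inE => /(_ hy).
suff : \max_(y | rlt T w y) ((n.*2).+2 - cC T y) <= \max_(y | rlt T v y) ((n.*2).+2 - cC T y) by lia.
apply/bigmax_leqP => y hy; apply: leq_bigmax_cond; by move: (s y); rewrite !inE => /(_ hy).
Qed.


Lemma tree_count n (e : rel 'I_n) (id : 'I_n -> nat) (par s : 'I_n -> nat) (v0 : 'I_n) :
  (forall u v, e u v = e v u) -> injective id ->
  (forall u, u != v0 -> exists w, e u w /\ id w = par u) ->
  (forall v, s v = 1 + \sum_(u | [&& e v u, par u == id v & id u != id v0]) s u) ->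
  s v0 = n.
Proof.
move=> sym inj hpar hs.
have hsum : \sum_(v : 'I_n) s v = n + \sum_(u | id u != id v0) s u.
  rewrite (eq_bigr _ (fun v _ => hs v)) big_split /=.
  rewrite (sum1dep_card (fun _ => true)) cardsT card_ord.
  congr (_ + _).
  rewrite (eq_bigr (fun v => \sum_u (if [&& e v u, par u == id v & id u != id v0]
                                      then s u else 0))); last first.
    by move=> v _; rewrite big_mkcond.
  rewrite exchange_big /= [RHS]big_mkcond /=.
  apply: eq_bigr => u _.
  case: (boolP (id u != id v0)) => hu.
  - have uv0 : u != v0 by apply: contraNneq hu => ->.
    have [w [ew hw]] := hpar u uv0.
    rewrite (bigD1 w) //= big1 ?addn0.
      by rewrite (sym w u) ew hw eqxx.
    move=> x hx; case: ifP => // /and3P[exu /eqP hfx _].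
    by move: hx; rewrite (inj x w) ?eqxx // hw -hfx.
  - by rewrite big1 // => x _; case: ifP => // /and3P[_ _].

move: hsum; rewrite (bigID (fun v => id v == id v0)) /=.
move/eqP; rewrite eqn_add2r => /eqP.
rewrite (big_pred1 v0) // => x; rewrite /=.
by apply/eqP/eqP => [/inj|->].
Qed.

Lemma card_part n (lt : rel 'I_n) (v : 'I_n) :
  (forall u, lt u u = false) -> (forall u w, lt u w -> lt w u -> False) ->
  n = 1 + #|[set u | lt u v]| + #|[set u | lt v u]|
        + #|[set u | (u != v) && ~~ lt u v && ~~ lt v u]|.
Proof.
move=> irr asym.
have part : forall u, (u == v) + lt u v + lt v u + ((u != v) && ~~ lt u v && ~~ lt v u) = 1.
  move=> u; case: (eqVneq u v) => [->|huv] /=; first by rewrite irr.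
  case h1: (lt u v); case h2: (lt v u) => //=.
  by exfalso; apply: (asym u v).
have nsc : forall b : pred 'I_n, \sum_(u : 'I_n) (b u : nat) = #|[set u | b u]|.
  move=> b; rewrite -sum1dep_card [RHS]big_mkcond /=; apply: eq_bigr => u _; by case: (b u).
have e1 : \sum_(u : 'I_n) 1 = n.
  by rewrite (sum1dep_card (fun _ => true)) cardsT card_ord.
rewrite -{1}e1.
rewrite (eq_bigr _ (fun u _ => esym (part u))) !big_split /= !nsc.
congr (_ + _ + _ + _).
rewrite -(cards1 v); apply: eq_card => u; by rewrite !inE.
Qed.

Definition layer n (e : rel 'I_n) (v0 : 'I_n) (k : nat) : {set 'I_n} :=
  iter k (fun S => S :|: [set y | [exists x in S, e x y]]) [set v0].

Lemma layer_path n (e : rel 'I_n) v0 p x k :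
  x \in layer e v0 k -> path e x p -> last x p \in layer e v0 (k + size p).
Proof.
elim: p x k => [|y p IH] x k hx /=; first by rewrite addn0.
move=> /andP[exy hp].
rewrite -addSnnS; apply: IH hp.
rewrite /layer iterS -/(layer e v0 k) inE; apply/orP; right.
rewrite inE; apply/existsP; exists x; by rewrite hx.
Qed.

Lemma layer_ex n (e : rel 'I_n) v0 : (forall v, connect e v0 v) ->
  forall v, exists k, v \in layer e v0 k.
Proof.
move=> conn v; have /connectP[p hp ->] := conn v.
exists (0 + size p); apply: layer_path hp.
by rewrite /layer /= inE.
Qed.

Lemma layer_step n (e : rel 'I_n) v0 k v :
  v \in layer e v0 k.+1 -> v \notin layer e v0 k -> exists x, x \in layer e v0 k /\ e x v.
Proof.
rewrite /layer iterS -/(layer e v0 k) inE => /orP[-> //|].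
by rewrite inE => /existsP[x /andP[hx ex]] _; exists x.
Qed.


Fixpoint szf n (ch : 'I_n -> 'I_n -> bool) (f : nat) (v : 'I_n) : nat :=
  if f is f'.+1 then 1 + \sum_(u | ch u v) szf ch f' u else 1.

Lemma complete_tree n (e : rel 'I_n) (id : 'I_n -> nat) (v0 : 'I_n) :
  (forall u v, e u v = e v u) -> (forall v, connect e v0 v) -> injective id ->
  exists (par s : 'I_n -> nat),
    [/\ forall u, u != v0 -> exists w, e u w /\ id w = par u,
        forall v, s v = 1 + \sum_(u | [&& e v u, par u == id v & id u != id v0]) s u,
        s v0 = n, forall v, s v <= n & forall v, par v = 0 \/ exists w, par v = id w].
Proof.
move=> sym conn inj.
have hex := layer_ex conn.
pose d v := ex_minn (hex v).
have dP : forall v, v \in layer e v0 (d v) /\ forall j, v \in layer e v0 j -> d v <= j.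
  by move=> v; rewrite /d; case: ex_minnP.
have d0 : d v0 = 0.
  by have [_ h] := dP v0; apply/eqP; rewrite -leqn0; apply: h; rewrite /layer /= inE.
have dv0 : forall v, d v = 0 -> v = v0.
  move=> v h; have [hv _] := dP v; move: hv; by rewrite h /layer /= inE => /eqP.
have dpar : forall v, v != v0 -> exists w, e v w && ((d w).+1 == d v).
  move=> v hv; have [hv1 hv2] := dP v.
  case E: (d v) => [|k]; first by move: hv; rewrite (dv0 v E) eqxx.
  have nk : v \notin layer e v0 k.
    by apply/negP => /hv2; rewrite E ltnn.
  rewrite E in hv1; have [x [hx exv]] := layer_step hv1 nk.
  have [hx1 hx2] := dP x.
  have := hx2 _ hx.
  have : v \in layer e v0 ((d x) + size [:: v]).
    by apply: (layer_path (p := [:: v]) hx1); rewrite /= exv.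
  move/hv2; rewrite E addn1 ltnS => h1 h2.
  exists x; rewrite sym exv /=; apply/eqP; congr S; apply/eqP; rewrite eqn_leq h1 h2.
  done.
pose parw v := [pick w | e v w && ((d w).+1 == d v)].
pose par v := if parw v is Some w then id w else 0.
have hpar : forall u, u != v0 -> exists w, e u w /\ id w = par u /\ (d w).+1 = d u.
  move=> u hu; rewrite /par /parw; case: pickP => [w /andP[h1 /eqP h2]|none].
    by exists w.
  by have [w hw] := dpar u hu; move: (none w); rewrite hw.
pose K := (\max_(v : 'I_n) d v).+1.
have dK : forall v, d v < K.
  by move=> v; rewrite ltnS; apply: (@leq_bigmax_cond _ (fun _ => true) d v).
pose child u v := [&& e v u, par u == id v & id u != id v0].
have chd : forall u v, child u v -> d u = (d v).+1.
  move=> u v /and3P[_ /eqP hp hid].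
  have uv0 : u != v0 by apply: contraNneq hid => ->.
  have [w [_ [hw hd]]] := hpar u uv0.
  by rewrite -hd (inj w v) // hw hp.
pose s v := szf child (K - d v) v.
have hs : forall v, s v = 1 + \sum_(u | child u v) s u.
  move=> v; rewrite /s.
  have : K - d v = (K - (d v).+1).+1 by have := dK v; lia.
  move=> ->; rewrite /=; congr (_ + _); apply: eq_bigr => u hu.
  by rewrite (chd _ _ hu).
have hpar2 : forall u, u != v0 -> exists w, e u w /\ id w = par u.
  by move=> u hu; have [w [h1 [h2 _]]] := hpar u hu; exists w.
have s0 : s v0 = n by apply: (tree_count sym inj hpar2 hs).
exists par, s; split => //; last first.
  by move=> v; rewrite /par; case: (parw v) => [w|]; [right; exists w|left].
suff : forall j v, d v = j -> s v <= n by move=> h v; exact: h (d v) v erefl.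
elim=> [|j IH] v hv; first by rewrite (dv0 v hv) s0.
have vv0 : v != v0 by apply/eqP => h; move: hv; rewrite h d0.
have [w [ew [hw hd]]] := hpar v vv0.
have := IH w ltac:(move: hd; rewrite hv; case). 
have cvw : child v w by rewrite /child sym ew hw eqxx /= (inj_eq inj) vv0.
rewrite (hs w) (bigD1 v cvw) /=; lia.
Qed.


Definition mkcert (l : seq nat) : certificate := enc_list l.

Lemma fld_mk (x0 x1 x2 x3 x4 x5 x6 x7 x8 x9 x10 x11 : nat) :
  let c := mkcert [:: x0; x1; x2; x3; x4; x5; x6; x7; x8; x9; x10; x11] in
  [/\ fA c = x0, fB c = x1, fC c = x2, fD c = x3 &
   [/\ fL c = x4, fpL c = x5, fR c = x6, fpR c = x7 &
   [/\ fr c = x8, fnp c = x9, fs c = x10 & fpar c = x11]]].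
Proof.
rewrite /= /fA /fB /fC /fD /fL /fpL /fR /fpR /fr /fnp /fs /fpar /fld /mkcert.
by rewrite (decl_enc [:: x0; x1; x2; x3; x4; x5; x6; x7; x8; x9; x10; x11]).
Qed.


Lemma size_enc_list l m : (forall x, x \in l -> x < 2 ^ m) ->
  size (enc_list l) <= size l * (m.*2).+1.
Proof.
elim: l => [|x l IH] h //=.
rewrite size_cat mulSn; apply: leq_add.
  by apply: size_encn; apply: h; rewrite inE eqxx.
by apply: IH => y hy; apply: h; rewrite inE hy orbT.
Qed.

Lemma pow_bounds n k : 0 < n ->
  (forall x, x <= (n.*2).+1 -> x < 2 ^ ((k + 3) * (trunc_log 2 n).+1)) /\
  (forall x, x <= n ^ k -> x < 2 ^ ((k + 3) * (trunc_log 2 n).+1)).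
Proof.
move=> hn.
set t := trunc_log 2 n.
have hnt : n < 2 ^ t.+1 by apply: trunc_log_ltn.
have hm : t.+2 <= (k + 3) * t.+1.
  rewrite mulnDl; apply: leq_trans (leq_addl _ _); rewrite mulnS; lia.
have hm2 : t.+1 * k <= (k + 3) * t.+1 by rewrite mulnC leq_mul2r leq_addr orbT.
split => x hx.
  apply: (leq_trans _ (leq_pexp2l (isT : 0 < 2) hm)).
  apply: (leq_ltn_trans hx); rewrite expnS; lia.
case: k hx hm hm2 => [|k] hx hm hm2.
  apply: (leq_ltn_trans hx); rewrite expn0.
  have : 1 < 2 ^ t.+2 by rewrite expnS; have := expn_gt0 2 t.+1; lia.
  move=> h; apply: (leq_trans h); exact: leq_pexp2l.
apply: (leq_ltn_trans hx); apply: (leq_trans _ (leq_pexp2l (isT : 0 < 2) hm2)).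
by rewrite expnM ltn_exp2r.
Qed.

Lemma complete k n N (e : rel 'I_n) (id : 'I_n -> nat) :
  @admissible k n N e id -> trapezoid_graph e ->
  exists c : 'I_n -> certificate,
    (forall v, size (c v) <= 36 * (k + 3) * (trunc_log 2 n).+1) /\
    (forall v, accepts_at (V k) N e id c v).
Proof.
case=> hn [[sym irr] [conn [inj [hid /andP[hnN _]]]]] [T hT].
have hM := @id_bound k n N id hnN hid.
pose v0 : 'I_n := Ordinal hn.
have [par [s [hpar hs s0 sle hparv]]] := complete_tree sym (conn v0) inj.
pose lt := rlt T.
have adj := rlt_adj hT.
pose L v := #|[set x | lt x v]|.
pose R v := #|[set y | lt v y]|.
pose pL v := if [pick w | e v w && ([set x | lt x w] \proper [set x | lt x v])] is Some w
             then id w else 0.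
pose pR v := if [pick w | e v w && ([set y | lt w y] \proper [set y | lt v y])] is Some w
             then id w else 0.
pose c v := mkcert [:: cA T v; cB T v; cC T v; cD T v; L v; pL v; R v; pR v;
                      id v0; n; s v; par v].
have FF := fun v => fld_mk (cA T v) (cB T v) (cC T v) (cD T v) (L v) (pL v) (R v) (pR v)
                            (id v0) n (s v) (par v).
have eA : forall v, fA (c v) = cA T v by move=> v; case: (FF v).
have eB : forall v, fB (c v) = cB T v by move=> v; case: (FF v).
have eC : forall v, fC (c v) = cC T v by move=> v; case: (FF v).
have eD : forall v, fD (c v) = cD T v by move=> v; case: (FF v).
have eL : forall v, fL (c v) = L v by move=> v; case: (FF v) => _ _ _ _ [].
have epL : forall v, fpL (c v) = pL v by move=> v; case: (FF v) => _ _ _ _ [].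
have eR : forall v, fR (c v) = R v by move=> v; case: (FF v) => _ _ _ _ [].
have epR : forall v, fpR (c v) = pR v by move=> v; case: (FF v) => _ _ _ _ [].
have er : forall v, fr (c v) = id v0 by move=> v; case: (FF v) => _ _ _ _ [_ _ _ _ []].
have enp : forall v, fnp (c v) = n by move=> v; case: (FF v) => _ _ _ _ [_ _ _ _ []].
have es : forall v, fs (c v) = s v by move=> v; case: (FF v) => _ _ _ _ [_ _ _ _ []].
have epar : forall v, fpar (c v) = par v by move=> v; case: (FF v) => _ _ _ _ [_ _ _ _ []].
have elef : forall u v, lefto (c u) (c v) = lt u v.
  by move=> u v; rewrite /lefto eA eB eC eD coord_lt.
have ltirr : forall v, lt v v = false by move=> v; apply: rlt_irr.
have lttr : forall u v w, lt u v -> lt v w -> lt u w by move=> u v w; apply: rlt_trans.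
have adj' : forall u v, u != v -> e u v = ~~ lt u v && ~~ lt v u by move=> u v; apply: adj.
have hid1 : forall v, 0 < id v by move=> v; case/andP: (hid v).
exists c; split.
  move=> v; have [b1 b2] := pow_bounds k hn.
  set m := (k + 3) * (trunc_log 2 n).+1.
  have hm : 0 < m by rewrite /m muln_gt0 addn3.
  apply: (leq_trans (size_enc_list (m := m) _)).
    have bn : n <= (n.*2).+1 by rewrite -addnn; lia.
    have bcard : forall (P : pred 'I_n), #|[set x | P x]| <= (n.*2).+1.
      move=> P; apply: leq_trans bn; have := max_card (mem [set x | P x]); by rewrite card_ord.
    have bid : forall x, x = 0 \/ (exists w, x = id w) -> x < 2 ^ m.
      move=> x [->|[w ->]]; first by rewrite expn_gt0.
      by apply: b2; case/andP: (hid w).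
    move=> x; rewrite !inE.
    case/orP => [/eqP ->|]; first by apply: b1; apply: leq_trans (cA_small T v) (leqnSn _).
    case/orP => [/eqP ->|]; first by apply: b1; apply: cB_small.
    case/orP => [/eqP ->|]; first by apply: b1; apply: leq_trans (cC_small T v) (leqnSn _).
    case/orP => [/eqP ->|]; first by apply: b1; apply: cD_small.
    case/orP => [/eqP ->|]; first by apply: b1; apply: bcard.
    case/orP => [/eqP ->|].
      apply: bid; rewrite /pL; case: pickP => [w _|_]; [right; by exists w|by left].
    case/orP => [/eqP ->|]; first by apply: b1; apply: bcard.
    case/orP => [/eqP ->|].
      apply: bid; rewrite /pR; case: pickP => [w _|_]; [right; by exists w|by left].
    case/orP => [/eqP ->|]; first by apply: bid; right; exists v0.
    case/orP => [/eqP ->|]; first by apply: b1.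
    case/orP => [/eqP ->|]; first by apply: b1; apply: leq_trans (sle v) bn.
    move/eqP => ->; exact: bid.
  rewrite /= -mulnA -/m; move: hm; clear; lia.
move=> v.
rewrite /accepts_at /V.
set vw := neighbour_view e id c v.
repeat (apply/andP; split).
- by rewrite eA eB cAB.
- by rewrite eC eD cCD.
- rewrite /vw (forall_view e c v hM (fun x => [&& incomp (c v) x, fr x == fr (c v) & fnp x == fnp (c v)]) inj).
  apply/forallP => u; apply/implyP => evu.
  have vu : v != u by apply/eqP => h; move: evu; rewrite h irr.
  by rewrite /incomp !elef !er !enp !eqxx -(adj' _ _ vu) evu.
- apply/implyP => hL0.
  rewrite /vw (exists_view e c v hM (fun j x => [&& j == fpL (c v), fL x < fL (c v),
                                 fA x <= fA (c v) & fC x <= fC (c v)]) inj).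
  move: hL0; rewrite eL => /card_gt0P [x0]; rewrite inE => hx0.
  have [w0 [evw0 pw0]] := poset_parent sym irr conn ltirr lttr adj' hx0.
  rewrite epL /pL; case: pickP => [w /andP[evw pw]|none]; last first.
    by move: (none w0); rewrite evw0 pw0.
  apply/existsP; exists w; rewrite evw eqxx /= eL eA eC (proper_card pw) /=.
  have [h1 h2] := cA_mono (proper_sub pw); by rewrite eA eC h1 h2.
- apply/forallP => j; apply/implyP.
  case E: (vw j) => [x|] //= /andP[hLx /eqP hpx].
  have [u [evu hu ex]] := view_some E; subst x.
  rewrite /vw (sum_view e c v hM (fun _ x => lefto x (c u)) (fun _ => 1) inj) sum1dep_card.
  rewrite !eL; rewrite epL in hpx.
  move: hpx; rewrite /pL; case: pickP => [w /andP[euw pw] hw|_ h]; last first.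
    by move: (hid1 v); rewrite -h.
  have wv : w = v by apply: inj.
  subst w.
  set S2 := [set w | e v w && lefto (c w) (c u)].
  have sub : [set x | lt x u] \subset [set x | lt x v] :|: S2.
    apply/subsetP => x; rewrite !inE => hxu.
    case hxv: (lt x v) => //=; rewrite elef hxu andbT.
    have uv : u != v by apply/eqP => h; move: euw; rewrite h irr.
    have nvu : ~~ lt v u by move: euw; rewrite adj' // => /andP[].
    have vx : v != x by apply/eqP => h; move: hxu nvu; rewrite h => ->.
    rewrite adj' // hxv andbT; apply/negP => hvx; move/negP: nvu; apply; exact: lttr hvx hxu.
  apply: (leq_trans (subset_leq_card sub)); by rewrite -cardsUI leq_addr.
- apply/implyP => hR0.
  rewrite /vw (exists_view e c v hM (fun j x => [&& j == fpR (c v), fR x < fR (c v),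
                                 fB (c v) <= fB x & fD (c v) <= fD x]) inj).
  move: hR0; rewrite eR => /card_gt0P [x0]; rewrite inE => hx0.
  have ltirr' : forall v, (fun a b => lt b a) v v = false by move=> ?; apply: ltirr.
  have lttr' : forall u v w, (fun a b => lt b a) u v -> (fun a b => lt b a) v w ->
                             (fun a b => lt b a) u w.
    by move=> a b d /= h1 h2; exact: lttr h2 h1.
  have adjf : forall u v, u != v -> e u v = ~~ (fun a b => lt b a) u v && ~~ (fun a b => lt b a) v u.
    by move=> a b hab /=; rewrite adj' // andbC.
  have [w0 [evw0 pw0]] := @poset_parent n e (fun a b => lt b a) sym irr conn ltirr' lttr' adjf v x0 hx0.
  rewrite epR /pR; case: pickP => [w /andP[evw pw]|none]; last first.
    by move: (none w0); rewrite evw0 pw0.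
  apply/existsP; exists w; rewrite evw eqxx /= eR eB eD (proper_card pw) /=.
  have [h1 h2] := cB_mono (proper_sub pw); by rewrite eB eD h1 h2.
- apply/forallP => j; apply/implyP.
  case E: (vw j) => [x|] //= /andP[hRx /eqP hpx].
  have [u [evu hu ex]] := view_some E; subst x.
  rewrite /vw (sum_view e c v hM (fun _ x => lefto (c u) x) (fun _ => 1) inj) sum1dep_card.
  rewrite !eR; rewrite epR in hpx.
  move: hpx; rewrite /pR; case: pickP => [w /andP[euw pw] hw|_ h]; last first.
    by move: (hid1 v); rewrite -h.
  have wv : w = v by apply: inj.
  subst w.
  set S2 := [set w | e v w && lefto (c u) (c w)].
  have sub : [set x | lt u x] \subset [set x | lt v x] :|: S2.
    apply/subsetP => x; rewrite !inE => hxu.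
    case hxv: (lt v x) => //=; rewrite elef hxu andbT.
    have uv : u != v by apply/eqP => h; move: euw; rewrite h irr.
    have nuv : ~~ lt u v by move: euw; rewrite adj' // => /andP[].
    have vx : v != x by apply/eqP => h; move: hxu nuv; rewrite h => ->.
    rewrite adj' // hxv /=; apply/negP => hxv2; move/negP: nuv; apply; exact: lttr hxu hxv2.
  apply: (leq_trans (subset_leq_card sub)); by rewrite -cardsUI leq_addr.
- have := sum_view e c v hM (fun _ _ => true) (fun _ => 1) inj.
  rewrite (eq_bigl (fun j : 'I_(N ^ k).+1 => vw j != None)); last by move=> j; rewrite andbT.
  rewrite /vw => ->; rewrite sum1dep_card eL eR enp.
  have asym : forall u w, lt u w -> lt w u -> False.
    by move=> u w h1 h2; move: (lttr _ _ _ h1 h2); rewrite ltirr.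
  have := card_part v ltirr asym.
  have -> : [set u | (u != v) && ~~ lt u v && ~~ lt v u] = [set u | e v u && true].
    apply/setP => u; rewrite !inE andbT.
    case: (eqVneq u v) => [->|uv] /=; first by rewrite irr.
    by rewrite adj' 1?eq_sym // andbC.
  move=> hn2; apply/eqP; rewrite [RHS]hn2 addn1 add1n; congr S; by rewrite -addnA addnC.
- apply/implyP; rewrite er es enp => /eqP h.
  by rewrite (inj _ _ h) s0.
- apply/implyP; rewrite er => hv.
  rewrite /vw (exists_view e c v hM (fun j _ => j == fpar (c v)) inj).
  have vv0 : v != v0 by apply: contraNneq hv => ->.
  have [w [evw hw]] := hpar v vv0.
  apply/existsP; exists w; by rewrite evw epar hw eqxx.
- rewrite /vw (sum_view e c v hM (fun j x => (fpar x == id v) && (j != fr (c v))) fs inj).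
  rewrite es (hs v) er; apply/eqP; congr (_ + _); apply: eq_big => u.
    by rewrite epar.
  by rewrite es.
Qed.


Definition trapOf (c : certificate) : trapezoid :=
  Trapezoid (INR (fA c)) (INR (fB c)) (INR (fC c)) (INR (fD c)).

Lemma INR_ltb (a b : nat) : Rlt (INR a) (INR b) <-> a < b.
Proof.
split => h; first by apply/ltP; apply: INR_lt.
by apply: lt_INR; apply/ltP.
Qed.

Lemma rleft_trapOf (x y : certificate) :
  fA x <= fB x -> fC x <= fD x -> fA y <= fB y -> fC y <= fD y ->
  rleft (trapOf x) (trapOf y) <-> lefto x y.
Proof.
move=> h1 h2 h3 h4.
have e1 : tmax (trapOf x) = INR (fB x).
  by rewrite /tmax /=; apply: Rmax_right; apply: le_INR; apply/leP.
have e2 : bmax (trapOf x) = INR (fD x).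
  by rewrite /bmax /=; apply: Rmax_right; apply: le_INR; apply/leP.
have e3 : tmin (trapOf y) = INR (fA y).
  by rewrite /tmin /=; apply: Rmin_left; apply: le_INR; apply/leP.
have e4 : bmin (trapOf y) = INR (fC y).
  by rewrite /bmin /=; apply: Rmin_left; apply: le_INR; apply/leP.
rewrite /rleft e1 e2 e3 e4 /lefto !INR_ltb.
split; [by case=> -> ->|by case/andP].
Qed.

Lemma sound k n N (e : rel 'I_n) (id : 'I_n -> nat) (c : 'I_n -> certificate) :
  @admissible k n N e id -> (forall v, accepts_at (V k) N e id c v) -> trapezoid_graph e.
Proof.
move=> adm acc.
have [box iff] := sound_comb adm acc.
exists (fun u => trapOf (c u)) => u v huv.
rewrite (iff u v huv) geom.
have [h1 h2] := box u; have [h3 h4] := box v.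
rewrite /incomp !rleft_trapOf //.
split.
  by case/andP => /negP a /negP b.
by case=> a b; apply/andP; split; apply/negP.
Qed.

Theorem theorem2 :
  forall k : nat,
  exists (C : nat) (A : verifier),
    trapezoid_PLS k A (fun n => C * (trunc_log 2 n).+1).
Proof.
move=> k; exists (36 * (k + 3)), (V k).
move=> n N e id adm; split.
  by move=> tg; apply: complete adm tg.
move=> ntg c.
case: (boolP [forall v, accepts_at (V k) N e id c v]) => [/forallP hall|/forallPn [v hv]].
  by exfalso; apply: ntg; apply: (sound adm hall).
by exists v; apply/negbTE.
Qed.
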